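(* Let $\Sigma$ be a finite set of tuple-generating dependencies (possibly cyclic, possibly with self-joins and constants) over a relational schema, and let $D$ be a finite database instance whose entries are constants and labeled nulls. Suppose a user inserts a tuple (or replaces all occurrences of a labeled null by a constant), and the Youtopia forward chase is then run without any frontier operations, i.e. only deterministic chase steps (as described in the context) are performed. Then the chase, viewed as a tree whose nodes are inserted tuples and whose edges are direct causality relationships, has the property that computation stops along every path after finitely many steps (unless the chase terminates, with all violations repaired, before such a point is reached). In particular, only finitely many tuples are inserted before the chase either terminates or reaches a state in which every pending violation is awaiting a frontier operation.
   Context: A tgd has the form $\Phi(\bar x,\bar y)\rightarrow \exists \bar z\,\Psi(\bar x,\bar z)$, with $\Phi,\Psi$ conjunctions of relational atoms over variables and constants; free variables are universally quantified. A database contains constants and labeled nulls. For a tgd $\sigma$ with free variables $\bar x$, LHS $\sigma_l(\bar x)$ and RHS $\sigma_r(\bar x,\bar y)$, a violation is an assignment $\bar a$ of database values to $\bar x$ with $D\models\sigma_l[\bar x\mapsto\bar a]$ but $D\not\models\sigma_r[\bar x\mapsto \bar a]$; its witness is the set of tuples of $D$ matching the LHS under this assignment. Specificity: a tuple $t=(a_1,\dots,a_k)$ is more specific than $t'=(a'_1,\dots,a'_k)$ (same relation) if the map $f(a'_i)=a_i$ is a well-defined function and $f$ is the identity on constants (values that are not labeled nulls). Forward chase (deterministic part): maintain a queue of violations, initially those created by the user's operation. Repeatedly pick a violation $v$ from the queue that is still present; instantiate the RHS of the violated tgd under the assignment of $v$, using fresh labeled nulls for the existentially quantified variables, yielding generated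 tuples. If for every generated tuple $t$ in relation $R$, $R$ contains no tuple more specific than $t$, insert all generated tuples (a deterministic repair), remove $v$, and append any new violations created by the insertions to the queue. Otherwise the generated tuples are set aside as positive frontier tuples (not inserted), the chase does not pursue that violation further, and it awaits a user frontier operation on it. The chase continues deterministically while some violation in the queue is deterministically repairable. *)

(* Defs.v *)
From Stdlib Require List.
From mathcomp Require Import all_boot.
Set Implicit Arguments. Unset Strict Implicit. Unset Printing Implicit Defensive.

(* A database value: [inl c] is the constant c, [inr n] is the labeled null n. *)
Definition value := (nat + nat)%type.
Definition is_null (v : value) : bool := if v is inr _ then true else false.

(* A fact (tuple) of relation [r]: (r, list of values). *)
Definition fact := (nat * seq value)%type.
Definition database := seq fact.

Inductive term := TVar of nat | TEx of nat | TConst of nat.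
Definition atom := (nat * seq term)%type.

(* A tgd  Phi(x) -> exists z, Psi(x, z).  Universal variables are
   TVar 0 .. TVar (nuv-1), existential ones TEx 0 .. TEx (nex-1). *)
Record tgd := Tgd { nuv : nat; nex : nat; lhs : seq atom; rhs : seq atom }.

Definition is_var_i (i : nat) (t : term) : bool :=
  if t is TVar k then k == i else false.

Definition wf_tgd (s : tgd) : bool :=
  [&& all (fun A => all (fun t => match t with
                                  | TVar i => i < nuv s
                                  | TEx _ => false
                                  | TConst _ => true end) A.2) (lhs s),
      all (fun A => all (fun t => match t with
                                  | TVar i => i < nuv s
                                  | TEx j => j < nex s
                                  | TConst _ => true end) A.2) (rhs s)
    & all (fun i => has (fun A => has (is_var_i i) A.2) (lhs s)) (iota 0 (nuv s))].

Definition inst_term (a b : seq value) (t : term) : value :=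
  match t with
  | TVar i => nth (inr 0) a i
  | TEx j => nth (inr 0) b j
  | TConst c => inl c
  end.
Definition inst_atom (a b : seq value) (A : atom) : fact :=
  (A.1, map (inst_term a b) A.2).

(* A violation: index of the tgd in Sigma and assignment of its universal
   (LHS) variables. *)
Definition viol := (nat * seq value)%type.
Definition tgd_of (S : seq tgd) (i : nat) : tgd := nth (Tgd 0 0 [::] [::]) S i.

Definition lhs_holds (D : database) (s : tgd) (a : seq value) : Prop :=
  forall A, List.In A (lhs s) -> inst_atom a [::] A \in D.
Definition rhs_holds (D : database) (s : tgd) (a : seq value) : Prop :=
  exists b : seq value, size b = nex s /\
    forall A, List.In A (rhs s) -> inst_atom a b A \in D.

Definition is_violation (S : seq tgd) (D : database) (v : viol) : Prop :=
  v.1 < size S /\ size v.2 = nuv (tgd_of S v.1) /\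
  lhs_holds D (tgd_of S v.1) v.2 /\ ~ rhs_holds D (tgd_of S v.1) v.2.

Definition more_specific (t t' : fact) : Prop :=
  t.1 = t'.1 /\
  exists f : value -> value, (forall c, f (inl c) = inl c) /\ map f t'.2 = t.2.

Definition null_in_db (n : nat) (D : database) : bool :=
  has (fun f => inr n \in f.2) D.

Definition fresh_nulls (D : database) (k : nat) (b : seq value) : Prop :=
  size b = k /\ all is_null b /\ uniq b /\
  forall n, inr n \in b -> ~~ null_in_db n D.

Definition generated (s : tgd) (a b : seq value) : seq fact :=
  map (inst_atom a b) (rhs s).

Definition det_repairable (D : database) (gen : seq fact) : Prop :=
  forall t, t \in gen -> ~ (exists t0, t0 \in D /\ more_specific t0 t).

Definition new_violations (S : seq tgd) (D D' : database) (L : seq viol) : Prop :=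
  forall w, w \in L <-> (is_violation S D' w /\ ~ is_violation S D w).

Definition state := (database * seq viol)%type.

(* A violation
   picked from the queue is either no longer present (dropped), or repaired
   deterministically, or (when not deterministically repairable) set aside
   awaiting a frontier operation, i.e. no longer pursued by the chase. *)
Inductive chase_step (S : seq tgd) : state -> state -> Prop :=
  | step_stale D Q v :
      v \in Q -> ~ is_violation S D v -> chase_step S (D, Q) (D, rem v Q)
  | step_frontier D Q v b :
      v \in Q -> is_violation S D v ->
      fresh_nulls D (nex (tgd_of S v.1)) b ->
      ~ det_repairable D (generated (tgd_of S v.1) v.2 b) ->
      chase_step S (D, Q) (D, rem v Q)
  | step_repair D Q v b L :
      v \in Q -> is_violation S D v ->
      fresh_nulls D (nex (tgd_of S v.1)) b ->
      det_repairable D (generated (tgd_of S v.1) v.2 b) ->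
      new_violations S D (D ++ generated (tgd_of S v.1) v.2 b) L ->
      chase_step S (D, Q) (D ++ generated (tgd_of S v.1) v.2 b, rem v Q ++ L).

Inductive user_op :=
  | InsertTuple of fact
  | ReplaceNull of nat & nat.

Definition subst_null (n c : nat) (v : value) : value :=
  if v == inr n then inl c else v.

Definition apply_op (op : user_op) (D : database) : database :=
  match op with
  | InsertTuple t => t :: D
  | ReplaceNull n c => map (fun f => (f.1, map (subst_null n c) f.2)) D
  end.

Definition chase_terminates (S : seq tgd) (s : state) : Prop :=
  Acc (fun s' s0 => chase_step S s0 s') s.

(* Main.v *)
Require Import Defs.
From mathcomp Require Import all_boot.
Set Implicit Arguments. Unset Strict Implicit. Unset Printing Implicit Defensive.

Lemma allIn {X} (a : pred X) l x : all a l -> List.In x l -> a x.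
Proof. elim: l => //= y l IH /andP[ay al] [<-|H]; [done| exact: IH]. Qed.

Lemma hasIn {X} (a : pred X) l : has a l -> exists x, List.In x l /\ a x.
Proof.
elim: l => //= y l IH /orP[ay|/IH[x [Hx ax]]]; [by exists y; auto| by exists x; auto].
Qed.

Lemma inMap {X} {Y : eqType} (f : X -> Y) l y :
  y \in map f l -> exists x, List.In x l /\ y = f x.
Proof.
elim: l => //= x l IH; rewrite in_cons => /orP[/eqP->|/IH[z [Hz ->]]];
  [by exists x; auto| by exists z; auto].
Qed.

Lemma mapIn {X} {Y : eqType} (f : X -> Y) l x : List.In x l -> f x \in map f l.
Proof.
elim: l => //= y l IH [->|H]; rewrite in_cons ?eqxx //; apply/orP; right; exact: IH.
Qed.

Lemma in_flat {X} {Y : eqType} (f : X -> seq Y) l x y :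
  List.In x l -> y \in f x -> y \in flatten (map f l).
Proof.
elim: l => //= z l IH [->|H] Hy; rewrite mem_cat ?Hy //; apply/orP; right; exact: IH.
Qed.

Lemma nthIn {X} (d : X) l i : i < size l -> List.In (nth d l i) l.
Proof. elim: l i => //= x l IH [|i] //= H; [by left| right; exact: IH]. Qed.

Definition tconst (T : term) : option nat := if T is TConst c then Some c else None.
Definition vconst (v : value) : option nat := if v is inl c then Some c else None.
Definition sc (S : seq tgd) : seq nat :=
  flatten (map (fun s => flatten (map (fun A : atom => pmap tconst A.2) (rhs s))) S).
Definition dbc (D : database) : seq nat :=
  flatten (map (fun f : fact => pmap vconst f.2) D).
Definition Inv (C : seq nat) (D : database) : Prop :=
  forall f, f \in D -> forall c, inl c \in f.2 -> c \in C.

Fixpoint allseqs (al : seq value) (n : nat) : seq (seq value) :=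
  if n is n'.+1 then [seq x :: s | x <- al, s <- allseqs al n'] else [:: [::]].

Lemma allseqsP al s : all (fun x => x \in al) s -> s \in allseqs al (size s).
Proof.
elim: s => [|x s IH] /=; first by rewrite inE.
move/andP=> [Hx Hs]. apply: allpairs_f => //. exact: IH.
Qed.

Lemma allseqsP' al n s : size s = n -> all (fun x => x \in al) s -> s \in allseqs al n.
Proof. move=> <-; exact: allseqsP. Qed.

Definition cv (s : seq value) : seq value :=
  map (fun v => if v is inr _ then inr (index v s) else v) s.
Definition canon (t : fact) : fact := (t.1, cv t.2).
Definition al C n : seq value := map inl C ++ map inr (iota 0 n).
Definition U (C : seq nat) (S : seq tgd) : seq fact :=
  flatten (map (fun s => flatten (map (fun A : atom =>
     [seq (A.1, x) | x <- allseqs (al C (size A.2)) (size A.2)]) (rhs s))) S).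
Definition mu C S (D : database) := count (fun u => u \notin map canon D) (U C S).

Lemma canon_ms t0 t : canon t0 = canon t -> more_specific t0 t.
Proof.
case: t0 t => r0 s0 [r s] [-> Hc]; split => //=.
exists (fun v => if v is inr _ then nth (inr 0) s0 (index v s) else v); split => //.
have Hsz : size s0 = size s.
  by have := congr1 size Hc; rewrite /cv !size_map.
apply: (@eq_from_nth _ (inr 0)); rewrite size_map ?Hsz // => i Hi.
rewrite (nth_map (inr 0)) //.
have := congr1 (fun x => nth (inr 0) x i) Hc; rewrite /cv /= (nth_map (inr 0)) ?Hsz //.
rewrite (nth_map (inr 0)) //.
case E: (nth (inr 0) s i) => [c|n]; case E0: (nth (inr 0) s0 i) => [c0|n0] //=.
move=> [Hidx]. rewrite -Hidx -E0 nth_index // mem_nth // Hsz //.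
Qed.

Lemma tconstIn c l : List.In (TConst c) l -> c \in pmap tconst l.
Proof.
elim: l => //= x l IH [->|H] /=; first by rewrite mem_head.
case: x => /= [?|?|?]; try exact: IH; rewrite in_cons IH ?orbT //.
Qed.

Lemma gen_consts C S D s a b A :
  List.In s S -> wf_tgd s -> lhs_holds D s a -> Inv C D -> {subset sc S <= C} ->
  all is_null b ->
  List.In A (rhs s) -> forall c, inl c \in (inst_atom a b A).2 -> c \in C.
Proof.
move=> HsS Hwf Hl HI Hsc Hb HA c /inMap [T [HT Hc]].
case/and3P: Hwf => _ Hr Hv.
move: Hc; case: T HT => [i|j|c'] HT /=.
- move=> Hc.
  have Hi : i < nuv s by have := allIn (allIn Hr HA) HT.
  have := allP Hv i; rewrite mem_iota add0n /= => /(_ Hi) /hasIn [A' [HA' /hasIn [T' [HT' Hvi]]]].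
  case: T' HT' Hvi => // k HT' /eqP Hk; subst k.
  apply: (HI _ (Hl _ HA')). rewrite Hc. exact: (mapIn (inst_term a [::]) HT').
- move=> Hc. exfalso. case: (ltnP j (size b)) => Hj.
  + move/(all_nthP (inr 0)): Hb => Hb. have := Hb j Hj. by rewrite -Hc.
  + by move: Hc; rewrite nth_default.
- move=> [->]. apply: Hsc. apply: (in_flat HsS). apply: (in_flat HA).
  exact: tconstIn.
Qed.

Lemma count_strict {T:eqType} (a1 a2 : pred T) s x :
  (forall y, a1 y -> a2 y) -> x \in s -> a2 x -> ~~ a1 x -> count a1 s < count a2 s.
Proof.
move=> Hsub; elim: s => //= y s IH; rewrite in_cons => /orP[/eqP<-|Hx] H2 H1.
- rewrite H2 (negbTE H1) add0n add1n ltnS; exact: sub_count.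
- move: (IH Hx H2 H1) => Hlt.
  case H1y: (a1 y); [rewrite (Hsub _ H1y) ltn_add2l // | rewrite add0n; exact: ltn_addl].
Qed.

Lemma step_lemma C S D Q D' Q' : all wf_tgd S -> {subset sc S <= C} -> Inv C D ->
  chase_step S (D, Q) (D', Q') ->
  (D' = D /\ size Q' < size Q) \/ (mu C S D' < mu C S D /\ Inv C D').
Proof.
move=> Hwf Hsc HI Hs.
inversion Hs as [D1 Q1 v Hv Hnv | D1 Q1 v b Hv Hvi Hf Hnd | D1 Q1 v b L Hv Hvi Hf Hd Hnew]; subst; clear Hs.
- left; split => //; rewrite size_rem //; by case: Q Hv.
- left; split => //; rewrite size_rem //; by case: Q Hv.
- right. move: Hvi => [Hlt [Hsz [Hl Hnr]]].
  set s := tgd_of S v.1 in Hl Hnr Hf Hd Hnew *.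
  have HsS : List.In s S by exact: nthIn.
  have Hws : wf_tgd s by exact: (allIn Hwf HsS).
  have Hb : all is_null b by case: Hf => _ [].
  split; last first.
    move=> f; rewrite mem_cat => /orP[Hf'|Hf']; first exact: HI.
    case/inMap: Hf' => A [HA ->]. exact: (gen_consts HsS Hws Hl HI Hsc Hb HA).
  case E: (rhs s) => [|A0 rest].
    exfalso; apply: Hnr; exists (nseq (nex s) (inr 0)); split; first by rewrite size_nseq.
    by rewrite E.
  have HA0 : List.In A0 (rhs s) by rewrite E; left.
  set t := inst_atom v.2 b A0.
  have Htg : t \in generated s v.2 b by rewrite /generated E /= in_cons eqxx.
  apply: (@count_strict _ _ _ _ (canon t)).
  + move=> u; rewrite map_cat mem_cat negb_or => /andP[] //.
  + rewrite /U. apply: (in_flat HsS). apply: (in_flat HA0).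
    rewrite /canon /=. apply: map_f.
    apply: allseqsP'; first by rewrite /cv !size_map. apply/allP => y /mapP [z Hz ->].
    move: Hz; case: z => [c|k] Hz.
    * rewrite mem_cat; apply/orP; left; apply: map_f.
      exact: (gen_consts HsS Hws Hl HI Hsc Hb HA0 Hz).
    * rewrite mem_cat; apply/orP; right; apply: map_f.
      rewrite mem_iota add0n /= -(size_map (inst_term v.2 b) A0.2) index_mem //.
  + apply/negP => /mapP [t0 Ht0 Heq]. apply: (Hd _ Htg). exists t0; split => //.
    exact: canon_ms.
  + rewrite negbK map_cat mem_cat; apply/orP; right; exact: map_f.
Qed.

Lemma main C S : all wf_tgd S -> {subset sc S <= C} ->
  forall n D, mu C S D <= n -> Inv C D -> forall Q, chase_terminates S (D, Q).
Proof.
move=> Hwf Hsc; elim=> [|n IHn] D Hmu HI Q.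
- suff H : forall m Q, size Q <= m -> chase_terminates S (D, Q) by exact: (H _ Q (leqnn _)).
  elim=> [|m IHm] Q1 HQ; constructor => -[D' Q'] Hs;
  case: (step_lemma Hwf Hsc HI Hs) => [[-> HQ'] | [Hlt HI']].
  + by move: (leq_trans HQ' HQ).
  + by move: (leq_trans Hlt Hmu).
  + apply: IHm. by rewrite -ltnS (leq_trans HQ' HQ).
  + by move: (leq_trans Hlt Hmu).
- suff H : forall m Q, size Q <= m -> chase_terminates S (D, Q) by exact: (H _ Q (leqnn _)).
  elim=> [|m IHm] Q1 HQ; constructor => -[D' Q'] Hs;
  case: (step_lemma Hwf Hsc HI Hs) => [[-> HQ'] | [Hlt HI']].
  + by move: (leq_trans HQ' HQ).
  + by apply: IHn => //; rewrite -ltnS (leq_trans Hlt Hmu).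
  + apply: IHm. by rewrite -ltnS (leq_trans HQ' HQ).
  + by apply: IHn => //; rewrite -ltnS (leq_trans Hlt Hmu).
Qed.

Theorem lemma1 (S : seq tgd) (D : database) (op : user_op) (Q0 : seq viol) :
  all wf_tgd S ->
  new_violations S D (apply_op op D) Q0 ->
  chase_terminates S (apply_op op D, Q0).
Proof.
move=> Hwf _.
set D0 := apply_op op D.
have HI : Inv (dbc D0 ++ sc S) D0.
  move=> f Hf c Hc. rewrite mem_cat; apply/orP; left.
  apply/flatten_mapP; exists f => //. rewrite mem_pmap. exact: (map_f vconst Hc).
have Hsc : {subset sc S <= dbc D0 ++ sc S} by move=> x Hx; rewrite mem_cat Hx orbT.
exact: (main Hwf Hsc (leqnn _) HI Q0).
Qed.
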